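(* Consider the power-law kinetic system on species $A_1,A_2,A_3$ with reactions $R_1: A_1+A_3\to A_1+A_2$, $R_2: A_1+A_2\to 2A_3$, $R_3: 2A_3\to A_1+A_3$, $R_4: A_3\to 0$, $R_5: A_3\to A_2+A_3$, with rates $k_r x^{F_r}$ where the kinetic order rows are $F_{R_1}=(0.5,0,0.5)$, $F_{R_2}=(1,1,0)$, $F_{R_3}=(0,0,1)$, $F_{R_4}=(0,0,1)$, $F_{R_5}=(0,0,1)$. This network has deficiency one, is not $t$-minimal, and the complexes $A_1+A_2$ and $2A_3$ do not form a cut pair; nevertheless the system has the capacity for multistationarity: there exist positive rate constants $k_{R_1},\dots,k_{R_5}$ for which $dx/dt=\sum_r k_r x^{F_r}(y'_r-y_r)$ has two distinct positive equilibria $c^*,c^{**}$ with $c^*-c^{**}$ in the stoichiometric subspace.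
   Context: For $x\in\mathbb{R}^3_{>0}$, $x^{F}=\prod_s x_s^{F_s}$; $y_r\to y'_r$ denotes reaction $r$. The stoichiometric subspace $S$ is the span of the reaction vectors. The deficiency is $n-l-\dim S$ ($n$ complexes, $l$ linkage classes, i.e. connected components of the reaction graph). A network is $t$-minimal if its number of terminal strong linkage classes (strongly connected components with no outgoing reaction) equals its number of linkage classes. Two adjacent complexes form a cut pair if removing the reaction arrow(s) between them disconnects their linkage class. *)

(* Defs.v *)
From Stdlib Require Import Reals.
From HB Require Import structures.
From mathcomp Require Import all_boot all_order all_algebra.

Set Implicit Arguments.
Unset Strict Implicit.
Unset Printing Implicit Defensive.

(* ns species, nc (distinct) complexes, nr reactions; complex i has
   stoichiometric coefficient [cplx i s] for species s; reaction r is
   src r -> tgt r. *)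
Record network := Network {
  ns : nat;
  nc : nat;
  nr : nat;
  cplx : 'I_nc -> 'I_ns -> nat;
  src : 'I_nr -> 'I_nc;
  tgt : 'I_nr -> 'I_nc
}.

Section NetworkDefs.
Variable N : network.

Definition reacts : rel 'I_(nc N) :=
  fun a b => [exists r : 'I_(nr N), (src r == a) && (tgt r == b)].

Definition adjacent : rel 'I_(nc N) := fun a b => reacts a b || reacts b a.

Definition n_linkage : nat := n_comp adjacent predT.

Definition stoich_mx : 'M[rat]_(nr N, ns N) :=
  \matrix_(r, s) (((cplx (tgt r) s)%:R - (cplx (src r) s)%:R) : rat)%R.

Definition dim_S : nat := \rank stoich_mx.

Definition deficiency : int :=
  ((nc N)%:Z - (n_linkage)%:Z - (dim_S)%:Z)%R.

Definition strongly_linked : rel 'I_(nc N) :=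
  fun a b => connect reacts a b && connect reacts b a.

(* a complex lies in a terminal strong linkage class iff everything
   reachable from it can reach it back (no reaction leaves its class) *)
Definition terminal : pred 'I_(nc N) :=
  fun a => [forall b, connect reacts a b ==> connect reacts b a].

Definition n_terminal_slc : nat := n_comp strongly_linked terminal.

Definition t_minimal : Prop := n_terminal_slc = n_linkage.

(* cut pair: a and b adjacent, and removing the reaction arrow(s) between
   them disconnects their linkage class *)
Definition adjacent_without (a b : 'I_(nc N)) : rel 'I_(nc N) :=
  fun x y => adjacent x y && ~~ (((x == a) && (y == b)) || ((x == b) && (y == a))).

Definition cut_pair (a b : 'I_(nc N)) : Prop :=
  adjacent a b /\
  exists x y, connect adjacent a x /\ connect adjacent a y /\
              ~~ connect (adjacent_without a b) x y.

Definition monomial (F : 'I_(nr N) -> 'I_(ns N) -> R) (x : 'I_(ns N) -> R)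
    (r : 'I_(nr N)) : R :=
  \big[Rmult/R1]_(s < ns N) Rpower (x s) (F r s).

Definition rvec (r : 'I_(nr N)) (s : 'I_(ns N)) : R :=
  Rminus (INR (cplx (tgt r) s)) (INR (cplx (src r) s)).

Definition plk_rhs (k : 'I_(nr N) -> R) (F : 'I_(nr N) -> 'I_(ns N) -> R)
    (x : 'I_(ns N) -> R) (s : 'I_(ns N)) : R :=
  \big[Rplus/R0]_(r < nr N) Rmult (Rmult (k r) (monomial F x r)) (rvec r s).

Definition positive_equilibrium k F (x : 'I_(ns N) -> R) : Prop :=
  (forall s, Rlt R0 (x s)) /\ (forall s, plk_rhs k F x s = R0).

Definition in_stoich_subspace (v : 'I_(ns N) -> R) : Prop :=
  exists a : 'I_(nr N) -> R,
    forall s, v s = \big[Rplus/R0]_(r < nr N) Rmult (a r) (rvec r s).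

Definition has_multistationarity_capacity
    (F : 'I_(nr N) -> 'I_(ns N) -> R) : Prop :=
  exists k : 'I_(nr N) -> R, (forall r, Rlt R0 (k r)) /\
  exists c1 c2 : 'I_(ns N) -> R,
    positive_equilibrium k F c1 /\ positive_equilibrium k F c2 /\
    (exists s, c1 s <> c2 s) /\
    in_stoich_subspace (fun s => Rminus (c1 s) (c2 s)).

End NetworkDefs.

(* Species: index 0 = A1, 1 = A2, 2 = A3.                              *)
(* Complexes: 0 = A1+A3, 1 = A1+A2, 2 = 2A3, 3 = A3, 4 = 0, 5 = A2+A3  *)
(* Reactions: R1 : 0 -> 1, R2 : 1 -> 2, R3 : 2 -> 0, R4 : 3 -> 4,      *)
(*            R5 : 3 -> 5  (R_i has index i-1).                        *)

Definition ex_cplx_table : seq (seq nat) :=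
  [:: [:: 1; 0; 1]; [:: 1; 1; 0]; [:: 0; 0; 2];
      [:: 0; 0; 1]; [:: 0; 0; 0]; [:: 0; 1; 1]].
Definition ex_src_table : seq nat := [:: 0; 1; 2; 3; 3].
Definition ex_tgt_table : seq nat := [:: 1; 2; 0; 4; 5].

Definition ex_network : network :=
  @Network 3 6 5
    (fun i s => nth 0 (nth [::] ex_cplx_table i) s)
    (fun r => inord (nth 0 ex_src_table r))
    (fun r => inord (nth 0 ex_tgt_table r)).

Definition ex_F_table : seq (seq R) :=
  [:: [:: Rdiv R1 2; R0; Rdiv R1 2];
      [:: R1; R1; R0];
      [:: R0; R0; R1];
      [:: R0; R0; R1];
      [:: R0; R0; R1]].

Definition ex_F : 'I_(nr ex_network) -> 'I_(ns ex_network) -> R :=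
  fun r s => nth R0 (nth [::] ex_F_table r) s.

Definition cA1A2 : 'I_(nc ex_network) := inord 1.
Definition c2A3 : 'I_(nc ex_network) := inord 2.

(* Main.v *)
Require Import Defs.
From Stdlib Require Import Reals Lra FunctionalExtensionality.
From HB Require Import structures.
From mathcomp Require Import all_boot all_order all_algebra.
Definition tins n k : option 'I_n :=
  (if k < n as b return (k < n = b -> option 'I_n) then fun H => Some (Ordinal H) else fun _ => None) erefl.
Definition myenum n : seq 'I_n := pmap (@tins n) (iota 0 n).
Lemma tinsE n k : tins n k = insub k.
Proof.
rewrite /tins. case: insubP => [u Hk Hv|Hk].
  move: (erefl (k < n)). rewrite {2 3}Hk => H. congr Some. apply: val_inj. by rewrite /= Hv.
by move: (erefl (k < n)); rewrite {2 3}(negbTE Hk).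
Qed.
Lemma EI n : Finite.enum 'I_n = myenum n.
Proof. apply: (inj_map val_inj). rewrite -enumT val_enum_ord /myenum (eq_pmap (@tinsE n)). exact: (esym (val_ord_enum n)). Qed.
Lemma inordE n m : @inord n m = odflt ord0 (tins n.+1 m).
Proof. by rewrite tinsE. Qed.
Lemma inordF : @inord = fun n m => odflt ord0 (tins n.+1 m).
Proof. apply: functional_extensionality_dep => n; apply: functional_extensionality => m. exact: inordE. Qed.
Ltac fc := cbv -[card Finite.enum inord]; rewrite ?card.unlock; cbv -[Finite.enum inord]; rewrite ?EI ?inordF; vm_compute; reflexivity.
Definition Cm : 'M[rat]_(3,5) := \matrix_(i < 3, r < 5) (nth 0 (nth [::] [:: [::0;0;1;-1;0]; [::0;0;0;0;1]; [::0;0;0;-1;0]] i) r)%R.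
Lemma CA : (Cm *m stoich_mx ex_network = 1%:M)%R.
Proof.
apply/matrixP => i j. rewrite !mxE !big_ord_recl big_ord0 !mxE /= ?inordE /=.
case: i => [[|[|[|i]]] Hi]; case: j => [[|[|[|j]]] Hj] //=.
all: apply/eqP; vm_compute; reflexivity.
Qed.
Lemma dimS : dim_S ex_network = 3.
Proof. apply/eqP; rewrite eqn_leq rank_leq_col /=. have := mxrankM_maxr Cm (stoich_mx ex_network). by rewrite CA mxrank1. Qed.
Lemma d2 : n_terminal_slc ex_network = 3.
Proof. rewrite /n_terminal_slc. fc. Qed.
Lemma d3 : n_linkage ex_network = 2.
Proof. rewrite /n_linkage. fc. Qed.
Lemma d1 : deficiency ex_network = Posz 1.
Proof. rewrite /deficiency dimS d3. by []. Qed.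
Lemma d4 : [forall x, forall y, connect (@adjacent ex_network) cA1A2 x ==> connect (@adjacent ex_network) cA1A2 y ==> connect (adjacent_without cA1A2 c2A3) x y].
Proof. fc. Qed.
Open Scope R_scope.
Definition kk : 'I_(nr ex_network) -> R := fun r => nth R0 [:: R1; R1; 2; R1; R1] r.
Definition ct (t : R) : 'I_(ns ex_network) -> R := fun s => nth R0 [:: t; 2; t] s.
Lemma rvecE r s : rvec (N:=ex_network) r s = INR (nth 0%nat (nth [::] ex_cplx_table (nth 0%nat ex_tgt_table r)) s) - INR (nth 0%nat (nth [::] ex_cplx_table (nth 0%nat ex_src_table r)) s).
Proof. rewrite /rvec /= !inordK //; case: r => [[|[|[|[|[|r]]]]] Hr] //. Qed.
Lemma hh t : 0 < t -> Rpower t (R1/2) * Rpower t (R1/2) = t.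
Proof. move=> ht. rewrite -Rpower_plus. replace (R1/2 + R1/2) with 1 by lra. by rewrite Rpower_1. Qed.
Lemma eqt t : 0 < t -> positive_equilibrium kk ex_F (ct t).
Proof.
move=> ht; split.
  case=> [[|[|[|s]]] Hs]; rewrite /ct /=; try lra; done.
have h2 := @hh t ht.
case=> [[|[|[|s]]] Hs]; rewrite /plk_rhs /monomial !big_ord_recl !big_ord0 /= ?rvecE /kk /ct /ex_F /=; try done;
rewrite ?Rpower_O ?Rpower_1; try lra; nra.
Qed.

Close Scope R_scope.
Theorem mainTheorem7 :
  deficiency ex_network = Posz 1 /\
  ~ t_minimal ex_network /\
  ~ cut_pair cA1A2 c2A3 /\
  has_multistationarity_capacity ex_F.
Proof.
split; first exact: d1.
split; first by rewrite /t_minimal d2 d3.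
split.
  move=> [_ [x [y [Hx [Hy Hn]]]]].
  move/forallP: d4 => /(_ x) /forallP /(_ y). rewrite Hx Hy /= => H.
  by rewrite H in Hn.
exists kk; split.
  case=> [[|[|[|[|[|r]]]]] Hr]; rewrite /kk /=; try lra; done.
exists (ct 1), (ct 4).
split; first by apply: eqt; lra.
split; first by apply: eqt; lra.
split.
  exists (@ord0 2). rewrite /ct /=. lra.
exists (fun r : 'I_(nr ex_network) => nth R0 [:: R0; R0; Ropp (INR 3); INR 6; R0] r).
case=> [[|[|[|s]]] Hs]; rewrite !big_ord_recl big_ord0 /= ?rvecE /ct /=; try done; lra.
Qed.
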